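(* Let $K$ be a field with algebraic closure $\overline{K}$, $U=\{u_1,\dots,u_d\}$ parameters and $X=\{x_1,\dots,x_n\}$ variables ordered $u_1\prec\dots\prec u_d\prec x_1\prec\dots\prec x_n$. Let $\mathbf{P}=\{p\}$ be a parametric system in $K[U][X]$ consisting of a single polynomial $p$, let $\mathbb{S}$ be a Wu's decomposition of $\mathbf{P}$ in $K[U][X]$, and let $\mathcal{L}=\{\mathbf{C}_{l,1},\dots,\mathbf{C}_{l,k}\}$ be a line of $\mathbb{S}$. Then for every $a\in\overline{K}^d\setminus\mathrm{V}^U(\mathbf{C}_{l,k})$, $p(a)$ is not the zero polynomial of $\overline{K}[X]$.
   Context: A parametric system is a non-empty finite subset of $K[U][X]\setminus K[X]$. For $F\in K[U][X]\setminus\{0\}$, its class is the largest $p$ with $\deg(F,x_p)>0$ (0 if none); if the class is $p>0$ the main variable is $x_p$ and, writing $F=C_0x_p^m+\dots+C_m$ with $C_0\ne0$, the initial is $\mathrm{I}(F)=C_0$. A triangular set is $\{T_1,\dots,T_r\}$ with strictly increasing positive classes. A non-contradictory ascending chain is a triangular set in which each $T_i$ has degree in $\mathrm{mvar}(T_j)$ less than $\deg(T_j,\mathrm{mvar}(T_j))$ for all $j<i$; a contradictory ascending chain is $\{F\}$ with $0\ne F\in K[U]$. An ascending chain $\mathbf{C}$ is a characteristic set of $\mathbf{P}$ if $\mathbf{C}\subset\langle\mathbf{P}\rangle_{K[U][X]}$ and the successive pseudo-remainder of each element of $\mathbf{P}$ w.r.t. $\mathbf{C}$ is $0$. A Wu's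 decomposition of $\mathbf{P}$ is the finite set of ascending chains produced by Wu's method: compute a characteristic set $\mathbf{C}$ of $\mathbf{P}$; if $\mathbf{C}=\{C_1,\dots,C_t\}$ is non-contradictory, recursively apply the method to each $\mathbf{P}\cup\mathbf{C}\cup\{\mathrm{I}(C_i)\}$; all characteristic sets obtained form the decomposition. A line of a Wu's decomposition $\mathbb{S}$ of $\mathbf{P}_1$ is a subset $\{\mathbf{C}_{l,1},\dots,\mathbf{C}_{l,k}\}$ such that $\mathbf{C}_{l,1}$ is a characteristic set of $\mathbf{P}_1$; for $2\le i\le k$, $\mathbf{C}_{l,i}$ is a characteristic set of $\mathbf{P}_i=\mathbf{P}_{i-1}\cup\mathbf{C}_{l,i-1}\cup\{\mathrm{I}(C_{l,i-1})\}$ for some $C_{l,i-1}\in\mathbf{C}_{l,i-1}$; and $\mathbf{C}_{l,1},\dots,\mathbf{C}_{l,k-1}$ are non-contradictory while $\mathbf{C}_{l,k}$ is contradictory. $F(a)$ denotes substitution of $a\in\overline{K}^d$ for $U$; $\mathrm{V}^U(\mathbf{B})$ is the common zero set in $\overline{K}^d$ of $\mathbf{B}\subset K[U]$. *)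

(* Defs.v *)
From HB Require Import structures.
From mathcomp Require Import all_boot all_order all_algebra.
From mathcomp Require Import mpoly.
Set Implicit Arguments. Unset Strict Implicit. Unset Printing Implicit Defensive.
Import Order.TTheory GRing.Theory.
Local Open Scope ring_scope.

(* K[U][X] is represented as {mpoly {mpoly K[d]}[n]}: polynomials in the
   n variables X = x_1..x_n (indices 0..n-1, x_1 smallest) whose coefficients
   are polynomials in the d parameters U. *)

Section WuDefs.
Context (K : fieldType) (d n : nat).
Local Notation KU := {mpoly K[d]}.
Local Notation KUX := {mpoly KU[n]}.

Definition degx (F : KUX) (j : nat) : nat :=
  (\max_(m <- msupp F) \max_(i < n | (i : nat) == j) m i)%N.

Definition cls (F : KUX) : nat := (\max_(i < n | 0 < degx F i) (i : nat).+1)%N.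

Definition xpow (j k : nat) : KUX :=
  'X_[ [multinom (if (i : nat) == j then k else 0%N) | i < n] ].

Definition coef_x (F : KUX) (j k : nat) : KUX :=
  \sum_(m <- msupp F | [forall i : 'I_n, ((i : nat) == j) ==> (m i == k)])
     F@_m *: 'X_[ [multinom (if (i : nat) == j then 0%N else m i) | i < n] ].

(* initial of F (meaningful when cls F > 0): leading coefficient w.r.t. mvar *)
Definition init (F : KUX) : KUX :=
  coef_x F (cls F).-1 (degx F (cls F).-1).

Definition prem_step (F G : KUX) : KUX :=
  let j := (cls F).-1 in
  let mF := degx F j in
  let mG := degx G j in
  if (G != 0) && (mF <= mG)%N
  then init F * G - coef_x G j mG * xpow j (mG - mF) * F
  else G.

(* pseudo-remainder of G w.r.t. F; for F of class 0 (a nonzero element of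
   K[U]) the pseudo-remainder is 0. *)
Definition prem (G F : KUX) : KUX :=
  if cls F == 0%N then 0
  else iter (degx G (cls F).-1).+1 (prem_step F) G.

Definition sprem (G : KUX) (C : seq KUX) : KUX :=
  foldr (fun T acc => prem acc T) G C.

Definition triangular (C : seq KUX) : bool :=
  sorted (fun a b => (cls a < cls b)%N) C && all (fun T => (0 < cls T)%N) C.

Definition noncontra_chain (C : seq KUX) : Prop :=
  triangular C /\
  forall i j : nat, (i < j < size C)%N ->
    (degx (nth (0%R : KUX) C j) (cls (nth (0%R : KUX) C i)).-1 < degx (nth (0%R : KUX) C i) (cls (nth (0%R : KUX) C i)).-1)%N.

Definition contra_chain (C : seq KUX) : Prop :=
  exists c : KU, c != 0 /\ C = [:: c%:MP].

Definition asc_chain (C : seq KUX) : Prop := noncontra_chain C \/ contra_chain C.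

Definition in_ideal (P : seq KUX) (f : KUX) : Prop :=
  exists cs : seq KUX, f = \sum_(i < size P) nth (0%R : KUX) cs i * nth (0%R : KUX) P i.

Definition charset (C P : seq KUX) : Prop :=
  [/\ asc_chain C, (forall c, c \in C -> in_ideal P c)
    & forall g, g \in P -> sprem g C = 0].

Inductive wu_decomp : seq KUX -> seq (seq KUX) -> Prop :=
| WuContra (P C : seq KUX) :
    charset C P -> contra_chain C -> wu_decomp P [:: C]
| WuNonContra (P C : seq KUX) (Ss : seq (seq (seq KUX))) :
    charset C P -> noncontra_chain C -> size Ss = size C ->
    (forall i, (i < size C)%N ->
       wu_decomp (P ++ C ++ [:: init (nth (0%R : KUX) C i)]) (nth [::] Ss i)) ->
    wu_decomp P (C :: flatten Ss).

Definition is_line (S : seq (seq KUX)) (P : seq KUX) (Lc : seq (seq KUX)) : Prop :=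
  (0 < size Lc)%N /\ (forall C, C \in Lc -> C \in S) /\
  exists Ps : seq (seq KUX),
    [/\ size Ps = size Lc, nth [::] Ps 0 = P,
        (forall i, (i < size Lc)%N -> charset (nth [::] Lc i) (nth [::] Ps i)),
        (forall i, (i.+1 < size Lc)%N ->
           noncontra_chain (nth [::] Lc i) /\
           exists c, c \in nth [::] Lc i /\
             nth [::] Ps i.+1 = nth [::] Ps i ++ nth [::] Lc i ++ [:: init c])
      & contra_chain (last [::] Lc)].

Definition in_KX (F : KUX) : Prop := forall m, exists c : K, F@_m = c%:MP.

End WuDefs.

Definition spec (K L : fieldType) (f : {rmorphism K -> L}) (d n : nat)
  (a : 'I_d -> L) (F : {mpoly {mpoly K[d]}[n]}) : {mpoly L[n]} :=
  map_mpoly (mmap f a) F.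

Definition inVU (K L : fieldType) (f : {rmorphism K -> L}) (d n : nat)
  (a : 'I_d -> L) (B : seq {mpoly {mpoly K[d]}[n]}) : Prop :=
  forall F, F \in B -> spec f a F = 0.

(* Main.v *)
Require Import Defs.
From HB Require Import structures.
From mathcomp Require Import all_boot all_order all_algebra.
From mathcomp Require Import mpoly.
Import GRing.Theory.
Local Open Scope ring_scope.

Set Implicit Arguments.
Section Aux.
Context (K : fieldType) (L : closedFieldType) (f : {rmorphism K -> L}) (d n : nat)
  (a : 'I_d -> L).
Local Notation KUX := {mpoly {mpoly K[d]}[n]}.
Local Notation Z F := (spec f a F = 0).

Lemma Z_coef (F : KUX) m : Z F -> mmap f a F@_m = 0.
Proof.
move=> H; have := congr1 (fun q => q@_m) H.
by rewrite /spec mcoeff_map_mpoly mcoeff0.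
Qed.

Lemma Z_init (F : KUX) : Z F -> Z (init F).
Proof.
move=> H; rewrite /init /coef_x /spec raddf_sum /=.
apply: big1 => m _; rewrite map_mpolyZ.
by rewrite [X in X *: _](_ : _ = 0) ?scale0r //; exact: (Z_coef m H).
Qed.

Lemma Z_ideal (P : seq KUX) c : (forall q, q \in P -> Z q) -> in_ideal P c -> Z c.
Proof.
move=> HP [cs ->]; rewrite /spec raddf_sum /=; apply: big1 => i _.
rewrite rmorphM /=.
have -> : map_mpoly (mmap f a) (nth 0 P i) = 0 by apply: HP; exact: mem_nth.
by rewrite mulr0.
Qed.
End Aux.

Theorem corollary1 (K : fieldType) (L : closedFieldType) (f : {rmorphism K -> L})
  (L_alg : forall y : L, exists q : {poly K}, q != 0 /\ root (map_poly f q) y)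
  (d n : nat) (p : {mpoly {mpoly K[d]}[n]})
  (p_param : ~ in_KX p)
  (S : seq (seq {mpoly {mpoly K[d]}[n]})) (HS : wu_decomp [:: p] S)
  (Lc : seq (seq {mpoly {mpoly K[d]}[n]})) (HL : is_line S [:: p] Lc)
  (a : 'I_d -> L) (Ha : ~ inVU f a (last [::] Lc)) :
  spec f a p != 0.
Proof.
apply/negP => /eqP Hp; apply: Ha.
case: HL => Hsz [_ [Ps [HPs HP0 Hch Hstep _]]].
have Hall : forall i, (i < size Lc)%N -> forall q, q \in nth [::] Ps i -> spec f a q = 0.
  elim=> [|i IH] Hi q.
    by rewrite HP0 inE => /eqP ->.
  have [_ [c [cin ->]]] := Hstep i Hi.
  have IHi := IH (ltnW Hi).
  have Hc : forall q, q \in nth [::] Lc i -> spec f a q = 0.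
    move=> q' q'in; case: (Hch i (ltnW Hi)) => _ Hid _.
    exact: (Z_ideal IHi (Hid _ q'in)).
  rewrite !mem_cat inE => /orP [/IHi //|/orP [/Hc //|/eqP ->]].
  exact: Z_init (Hc _ cin).
move=> F; have Hk : ((size Lc).-1 < size Lc)%N by rewrite prednK.
rewrite (last_nth [::]) -(prednK Hsz) /= => Fin.
case: (Hch _ Hk) => _ Hid _.
exact: (Z_ideal (Hall _ Hk) (Hid _ Fin)).
Qed.
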